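(* Given $t,\Delta\in\mathbb{N}$ and a set $B\subseteq[t]$ (given as a sorted list), one can compute in time $O(|B|)$ a set $A$ such that $A$ sparsely $(t,\Delta)$-approximates $B$.
   Context: $\mathbb{N}=\{0,1,2,\dots\}$, $[t]=\{0,1,\dots,t\}$. For $A\subseteq[t]$ and $b\in\mathbb{N}$ define $\mathrm{apx}^-_t(b,A)=\max\{a\in A\cup\{t+1\}: a\le b\}$ and $\mathrm{apx}^+_t(b,A)=\min\{a\in A\cup\{t+1\}: a\ge b\}$, with $\max\emptyset=-\infty$, $\min\emptyset=\infty$. $A$ $(t,\Delta)$-approximates $B$ if $A\subseteq B\subseteq[t]$ and for every $b\in B$, $\mathrm{apx}^+_t(b,A)-\mathrm{apx}^-_t(b,A)\le\Delta$. A set $A\subseteq\mathbb{N}$ is $\Delta$-sparse if $|A\cap[x,x+\Delta]|\le 2$ for every $x\in\mathbb{N}$; $A$ sparsely $(t,\Delta)$-approximates $B$ if $A$ is $\Delta$-sparse and $(t,\Delta)$-approximates $B$. *)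

(* Defs.v *)
From mathcomp Require Import all_boot.
Set Implicit Arguments. Unset Strict Implicit. Unset Printing Implicit Defensive.

(* Sets of naturals are represented by finite sequences, read as sets via \in. *)

(* apx^-_t(b,A) = max {a in A ∪ {t+1} | a <= b}; None stands for -oo (empty max). *)
Definition apx_minus (t b : nat) (A : seq nat) : option nat :=
  let S := [seq a <- t.+1 :: A | a <= b] in
  if S is [::] then None else Some (\max_(a <- S) a).

(* apx^+_t(b,A) = min {a in A ∪ {t+1} | a >= b}; None stands for +oo (empty min). *)
Definition apx_plus (t b : nat) (A : seq nat) : option nat :=
  let S := [seq a <- t.+1 :: A | b <= a] in
  if S is a0 :: _ then Some (foldr minn a0 S) else None.

(* apx^+ - apx^- <= Delta, with the conventions +oo - x = x - (-oo) = +oo. *)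
Definition apx_gap_le (t Delta b : nat) (A : seq nat) : bool :=
  match apx_plus t b A, apx_minus t b A with
  | Some hi, Some lo => hi - lo <= Delta
  | _, _ => false
  end.

Definition approximates (t Delta : nat) (A B : seq nat) : Prop :=
  {subset A <= B} /\ (forall b, b \in B -> b <= t) /\
  (forall b, b \in B -> apx_gap_le t Delta b A).

Definition sparse (Delta : nat) (A : seq nat) : Prop :=
  forall x : nat, count (fun a => a \in A) (iota x Delta.+1) <= 2.

Definition sparsely_approximates (t Delta : nat) (A B : seq nat) : Prop :=
  sparse Delta A /\ approximates t Delta A B.

(* Register machine: registers indexed by nat, values nat (word-RAM style).
   Commands: loop-free (assignment, output, sequencing, comparison branch),
   each executed command node costs one step. *)
Inductive expr : Type :=
| EVar of nat
| EConst of nat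
| EAdd of expr & expr
| ESub of expr & expr.

Inductive cmd : Type :=
| CSkip
| CAssign of nat & expr
| CEmit of expr
| CSeq of cmd & cmd
| CIfLe of expr & expr & cmd & cmd.

Fixpoint eval (r : nat -> nat) (e : expr) : nat :=
  match e with
  | EVar i => r i
  | EConst n => n
  | EAdd e1 e2 => eval r e1 + eval r e2
  | ESub e1 e2 => eval r e1 - eval r e2
  end.

Definition upd (r : nat -> nat) (i v : nat) : nat -> nat :=
  fun j => if j == i then v else r j.

Record mstate := MState { regs : nat -> nat; out : seq nat; steps : nat }.

Fixpoint exec (c : cmd) (s : mstate) : mstate :=
  match c with
  | CSkip => MState (regs s) (out s) (steps s).+1
  | CAssign i e => MState (upd (regs s) i (eval (regs s) e)) (out s) (steps s).+1
  | CEmit e => MState (regs s) (rcons (out s) (eval (regs s) e)) (steps s).+1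
  | CSeq c1 c2 => exec c2 (exec c1 (MState (regs s) (out s) (steps s).+1))
  | CIfLe e1 e2 c1 c2 =>
      let s' := MState (regs s) (out s) (steps s).+1 in
      if eval (regs s) e1 <= eval (regs s) e2 then exec c1 s' else exec c2 s'
  end.

(* A streaming program: an initialisation, a loop body executed once per input
   element (read sequentially from the sorted input list), and a finalisation. *)
Record sprog := SProg { p_init : cmd; p_body : cmd; p_fin : cmd }.

(* Input convention: register 0 holds t, register 1 holds Delta, all others 0;
   before each run of the body, the current element of B is placed in register 2
   (costing one step). *)
Definition run (P : sprog) (t Delta : nat) (B : seq nat) : mstate :=
  let r0 := upd (upd (fun _ => 0) 0 t) 1 Delta in
  let s0 := exec (p_init P) (MState r0 [::] 0) in
  let s1 := foldl (fun s b => exec (p_body P) (MState (upd (regs s) 2 b) (out s) (steps s).+1)) s0 B in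
  exec (p_fin P) s1.

(* Main.v *)
Require Import Defs.
From mathcomp Require Import all_boot.
From mathcomp Require Import zify.

Fixpoint gr (D L p : nat) (s : seq nat) : seq nat :=
  match s with
  | [::] => [:: p]
  | c :: s' => if c <= L + D then gr D L c s' else p :: gr D p c s'
  end.

Fixpoint gap3 (D : nat) (A : seq nat) : bool :=
  match A with
  | a0 :: ((a1 :: a2 :: _) as A') => (a0 + D < a2) && gap3 D A'
  | _ => true
  end.

Lemma gr_subseq D L p s : subseq (gr D L p s) (p :: s).
Proof.
elim: s L p => [|c s IH] L p; first by rewrite /= eqxx.
rewrite [gr _ _ _ (_ :: _)]/=; case: ifP => _.
  apply: (subseq_trans (IH L c)); exact: subseq_cons.
by rewrite /= eqxx; apply: IH.
Qed.

Lemma gr_head D L p s : exists h r, gr D L p s = h :: r /\ (h <= p \/ h <= L + D).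
Proof.
elim: s L p => [|c s IH] L p /=; first by exists p, [::]; split => //; left.
case: ifP => H.
  have [h [r [-> Hh]]] := IH L c; exists h, r; split => //; right; lia.
by exists p, (gr D p c s); split => //; left.
Qed.

Lemma gr_gap3 D L p s : sorted ltn (L :: p :: s) -> gap3 D (L :: gr D L p s).
Proof.
elim: s L p => [|c s IH] L p //= Hs.
move: Hs => /andP [Hlp /andP [Hpc Hs]].
case: ifP => H.
  apply: IH => /=; rewrite Hs andbT; exact: ltn_trans Hpc.
have [h [r [E _]]] := gr_head D p c s.
have Hsub := gr_subseq D p c s.
rewrite E in Hsub *.
have hin : h \in c :: s by apply: (mem_subseq Hsub); rewrite inE eqxx.
have hc : c <= h.
  move: hin; rewrite inE => /orP [/eqP -> //|hs].
  have : path ltn c s by [].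
  rewrite path_sortedE; last exact: ltn_trans.
  by move=> /andP [/allP /(_ h hs) ?] _; apply: ltnW.
apply/andP; split; first lia.
rewrite -E; apply: IH => /=; by rewrite Hpc.
Qed.

Lemma gr_cover D L p s : sorted ltn (L :: p :: s) ->
  forall b, b \in p :: s -> exists a1 a2, a1 \in L :: gr D L p s /\ a2 \in gr D L p s /\
     a1 <= b <= a2 /\ a2 <= a1 + D.
Proof.
elim: s L p => [|c s IH] L p Hs b.
  rewrite inE => /eqP ->; exists p, p; rewrite /= !inE eqxx orbT; split => //; split => //; lia.
move: (Hs) => /= /andP [Hlp /andP [Hpc Hs']].
rewrite /=; case: ifP => H.
  rewrite inE => /orP [/eqP ->|bin].
    have [h [r [E Hh]]] := gr_head D L c s.
    have Hsub := gr_subseq D L c s.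
    rewrite E in Hsub *.
    have hin : h \in c :: s by apply: (mem_subseq Hsub); rewrite inE eqxx.
    have hc : c <= h.
      move: hin; rewrite inE => /orP [/eqP -> //|hs].
      have : path ltn c s by [].
      rewrite path_sortedE; last exact: ltn_trans.
      by move=> /andP [/allP /(_ h hs) ?] _; apply: ltnW.
    exists L, h; rewrite !inE eqxx /=; split => //; split => //; lia.
  apply: IH => //=; rewrite Hs' andbT; exact: ltn_trans Hpc.
rewrite inE => /orP [/eqP ->|bin].
  exists p, p; rewrite !inE eqxx orbT; split => //; split => //; lia.
have Hs2 : sorted ltn (p :: c :: s) by rewrite /= Hpc.
have [a1 [a2 [H1 [H2 H3]]]] := IH p c Hs2 b bin.
exists a1, a2; split; last split => //.
  by move: H1; rewrite !inE => /orP [->|->]; rewrite ?orbT.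
by rewrite inE H2 orbT.
Qed.

Lemma count_cons_le (a : nat) (A : seq nat) s : uniq s ->
  count (fun y => y \in a :: A) s <= 1 + count (fun y => y \in A) s.
Proof.
move=> us.
have := count_predUI (pred1 a) (fun y => y \in A) s.
rewrite (count_uniq_mem a us).
have -> : count (predU (pred1 a) (fun y => y \in A)) s = count (fun y => y \in a :: A) s.
  by apply: eq_count => y; rewrite inE.
move=> E.
have : (a \in s) <= 1 by case: (a \in s).
lia.
Qed.

Lemma count_memsz (A : seq nat) x n : count (fun y => y \in A) (iota x n) <= size A.
Proof.
elim: A => [|a A IH].
  by rewrite (eq_count (a2 := pred0)) ?count_pred0.
apply: leq_trans (count_cons_le _ _ _ (iota_uniq x n)) _; by rewrite /= add1n ltnS.
Qed.

Lemma gap3_tail D a A : gap3 D (a :: A) -> gap3 D A.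
Proof. by case: A => [|a1 [|a2 A]] //= /andP []. Qed.

Lemma sparse_of D A : sorted ltn A -> gap3 D A -> sparse D A.
Proof.
move=> Hs Hg x.
elim: A Hs Hg => [|a0 A IH] Hs Hg.
  by rewrite (eq_count (a2 := pred0)) ?count_pred0.
have HsA : sorted ltn A by move: Hs; rewrite /=; case: A {IH Hg} => //= a A /andP [].
case: (ltnP a0 x) => Hax.
  rewrite (@eq_in_count _ _ (fun y => y \in A)); first by apply: IH => //; exact: gap3_tail Hg.
  move=> y; rewrite mem_iota inE => /andP [Hy _].
  have -> : (y == a0) = false by apply/negbTE; rewrite neq_ltn; apply/orP; right; lia.
  by [].
case: A IH Hs Hg HsA => [|a1 [|a2 r]] IH Hs Hg HsA.
- exact: leq_trans (count_memsz _ _ _) _.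
- exact: leq_trans (count_memsz _ _ _) _.
have {Hg} Hg : a0 + D < a2 by move: Hg => /= /andP [].
apply: leq_trans (count_cons_le _ _ _ (iota_uniq _ _)) _.
apply: leq_trans (leq_add (leqnn 1) (count_cons_le _ _ _ (iota_uniq _ _))) _.
suff -> : count (fun y => y \in a2 :: r) (iota x D.+1) = 0 by [].
apply/eqP; rewrite -leqn0 leqNgt -has_count; apply/hasPn => y.
rewrite mem_iota => /andP [_ Hy].
rewrite inE; apply/negP => /orP [/eqP E|yr]; first lia.
have : path ltn a2 r by move: HsA => /= /andP [].
rewrite path_sortedE; last exact: ltn_trans.
move=> /andP [/allP /(_ y yr) ? _]; lia.
Qed.

Lemma foldr_minn_le d (S : seq nat) x : x \in S -> foldr minn d S <= x.
Proof.
elim: S => [|a S IH] //=; rewrite inE => /orP [/eqP ->|/IH]; first exact: geq_minl.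
move=> h; apply: leq_trans (geq_minr _ _) h.
Qed.

Lemma foldr_minn_ge d (S : seq nat) b : b <= d -> all (fun a => b <= a) S -> b <= foldr minn d S.
Proof.
move=> hd; elim: S => [|a S IH] //= /andP [ha hS].
by rewrite leq_min ha IH.
Qed.

Lemma minus_spec t b (A : seq nat) a1 : a1 \in A -> a1 <= b ->
  exists lo, apx_minus t b A = Some lo /\ a1 <= lo <= b.
Proof.
move=> ha hb; rewrite /apx_minus.
have hin : a1 \in [seq a <- t.+1 :: A | a <= b] by rewrite mem_filter hb inE ha orbT.
case E: [seq a <- t.+1 :: A | a <= b] => [|x S]; first by rewrite E in hin.
exists (\max_(a <- x :: S) a); split => //.
rewrite -E; apply/andP; split.
  exact: (@leq_bigmax_seq _ _ xpredT (fun a => a) a1).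
apply/bigmax_leqP_seq => i; rewrite mem_filter => /andP [] //.
Qed.

Lemma plus_spec t b (A : seq nat) a2 : a2 \in A -> b <= a2 ->
  exists hi, apx_plus t b A = Some hi /\ b <= hi <= a2.
Proof.
move=> ha hb; rewrite /apx_plus.
have hin : a2 \in [seq a <- t.+1 :: A | b <= a] by rewrite mem_filter hb inE ha orbT.
have hall : all (fun a => b <= a) [seq a <- t.+1 :: A | b <= a] by apply/allP => y; rewrite mem_filter => /andP [].
case E: [seq a <- t.+1 :: A | b <= a] => [|x S]; first by rewrite E in hin.
exists (foldr minn x (x :: S)); split => //.
rewrite E in hin hall; apply/andP; split.
  apply: foldr_minn_ge => //; by move: hall => /= /andP [].
exact: foldr_minn_le.
Qed.

Lemma gap_of t D b (A : seq nat) a1 a2 : a1 \in A -> a2 \in A -> a1 <= b <= a2 -> a2 <= a1 + D ->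
  apx_gap_le t D b A.
Proof.
move=> h1 h2 /andP [hb1 hb2] hd.
have [lo [El Hl]] := minus_spec t b A a1 h1 hb1.
have [hi [Eh Hh]] := plus_spec t b A a2 h2 hb2.
rewrite /apx_gap_le El Eh; lia.
Qed.

Definition body : cmd :=
  CIfLe (EVar 3) (EConst 0)
    (CSeq (CEmit (EVar 2)) (CSeq (CAssign 5 (EVar 2)) (CAssign 3 (EConst 1))))
    (CSeq (CIfLe (EConst 2) (EVar 3)
              (CIfLe (EVar 2) (EAdd (EVar 5) (EVar 1)) CSkip
                     (CSeq (CEmit (EVar 4)) (CAssign 5 (EVar 4))))
              CSkip)
          (CSeq (CAssign 4 (EVar 2)) (CAssign 3 (EConst 2)))).

Definition fin : cmd := CIfLe (EConst 2) (EVar 3) (CEmit (EVar 4)) CSkip.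

Definition prog := SProg CSkip body fin.

Definition F (s : mstate) (b : nat) : mstate :=
  exec body (MState (upd (regs s) 2 b) (out s) (steps s).+1).

Lemma run2 D rest : forall s, regs s 1 = D -> regs s 3 = 2 ->
  out (exec fin (foldl F s rest)) = out s ++ gr D (regs s 5) (regs s 4) rest /\
  steps (exec fin (foldl F s rest)) <= steps s + 20 * size rest + 20.
Proof.
elim: rest => [|c rest IH] s h1 h3.
  rewrite /fin /= h3 /=; split; [by rewrite cats1 | lia].
have [E1 [E3 [Eo [Es [E5 E4]]]]] : regs (F s c) 1 = D /\ regs (F s c) 3 = 2 /\
  out (F s c) = out s ++ (if c <= regs s 5 + D then [::] else [:: regs s 4]) /\
  steps (F s c) <= steps s + 20 /\
  regs (F s c) 5 = (if c <= regs s 5 + D then regs s 5 else regs s 4) /\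
  regs (F s c) 4 = c.
  rewrite /F /body /= /upd /= h3 /= h1; case: ifP => H /=;
  rewrite ?cats0 ?cats1; do !split => //; lia.
have -> : foldl F s (c::rest) = foldl F (F s c) rest by [].
have [Ho Hst] := IH (F s c) E1 E3.
rewrite Ho Eo E5 E4 -catA; split.
  by rewrite [gr _ _ _ (_::_)]/=; case: ifP.
have Hsz : size (c::rest) = (size rest).+1 by [].
lia.
Qed.

Lemma spec t D b s : sorted ltn (b :: s) -> all (fun x => x <= t) (b :: s) ->
  sparsely_approximates t D
    (b :: match s with [::] => [::] | c :: s' => gr D b c s' end) (b :: s).
Proof.
move=> Hs Ht.
have Hbt : forall x, x \in b :: s -> x <= t by move=> x; move/allP: Ht => /(_ x).
case: s Hs Ht Hbt => [|c s'] Hs Ht Hbt.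
  split; first by move=> x; exact: leq_trans (count_memsz _ _ _) _.
  split; first by move=> x; rewrite !inE.
  split => // x; rewrite inE => /eqP ->.
  apply: (@gap_of t D b [:: b] b b); rewrite ?inE ?eqxx ?leqnn //; lia.
have Hsub : subseq (b :: gr D b c s') (b :: c :: s') by by rewrite /= eqxx; apply: gr_subseq.
have Hsort : sorted ltn (b :: gr D b c s') by apply: subseq_sorted Hsub Hs; exact: ltn_trans.
split; first by apply: sparse_of => //; exact: gr_gap3.
split; first exact: mem_subseq.
split => // x; rewrite inE => /orP [/eqP ->|xin].
  apply: (@gap_of t D b _ b b); rewrite ?inE ?eqxx ?leqnn //; lia.
have [a1 [a2 [H1 [H2 [H3 H4]]]]] := @gr_cover D b c s' Hs x xin.
apply: (@gap_of t D x _ a1 a2) => //.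
by rewrite inE H2 orbT.
Qed.

Lemma runE t D B : run prog t D B =
  exec fin (foldl F (MState (upd (upd (fun _ => 0) 0 t) 1 D) [::] 1) B).
Proof. reflexivity. Qed.

Lemma foldl_cons' (f : mstate -> nat -> mstate) s x l : foldl f s (x :: l) = foldl f (f s x) l.
Proof. by []. Qed.

Theorem lemma4p7 :
  exists (P : sprog) (c : nat),
    forall (t Delta : nat) (B : seq nat),
      sorted ltn B -> all (fun b => b <= t) B ->
      steps (run P t Delta B) <= c * (size B).+1 /\
      sparsely_approximates t Delta (out (run P t Delta B)) B.
Proof.
exists prog, 100 => t D B HB Ht.
set r0 := upd (upd (fun _ => 0) 0 t) 1 D.
set s0 := MState r0 [::] 1.
case: B HB Ht => [|b s] HB Ht.
  rewrite runE -/r0 -/s0 /=.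
  rewrite /fin /s0 /r0 /upd /=; split => //.
  split; first by move=> x; rewrite (eq_count (a2 := pred0)) ?count_pred0.
  by split.
have [F1 [F3 [F5 [Fo Fs]]]] : regs (F s0 b) 1 = D /\ regs (F s0 b) 3 = 1 /\
   regs (F s0 b) 5 = b /\ out (F s0 b) = [:: b] /\ steps (F s0 b) <= 20.
  by rewrite /F /body /s0 /r0 /upd /=.
case: s HB Ht => [|c s'] HB Ht.
  rewrite runE -/r0 -/s0 foldl_cons'.
  move: F1 F3 F5 Fo Fs; set s1 := F s0 b => F1 F3 F5 Fo Fs; clearbody s1.
  rewrite /fin /= F3 /= Fo; split; first lia.
  exact: (@spec t D b [::] HB Ht).
have [G1 [G3 [G5 [G4 [Go Gs]]]]] : regs (F (F s0 b) c) 1 = D /\ regs (F (F s0 b) c) 3 = 2 /\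
   regs (F (F s0 b) c) 5 = b /\ regs (F (F s0 b) c) 4 = c /\
   out (F (F s0 b) c) = [:: b] /\ steps (F (F s0 b) c) <= 40.
  move: F1 F3 F5 Fo Fs; set s1 := F s0 b => F1 F3 F5 Fo Fs; clearbody s1.
  rewrite /F /body /upd /= F3 /= /upd /= F1 F5 Fo.
  split; first by []. split; first by []. split; first by []. split; first by []. split; first by []. lia.
rewrite runE -/r0 -/s0 !foldl_cons'.
have [Ho Hst] := @run2 D s' _ G1 G3.
rewrite Ho Go G5 G4; split.
  have Hsz : size [:: b, c & s'] = (size s').+2 by [].
  rewrite Hsz; lia.
exact: (@spec t D b (c :: s') HB Ht).
Qed.
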